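(* Let $G_1,G_2,H_1,H_2\in SL^+_{sym}(2)$. Then $$K^{min}=\sqrt{\lambda_{\max}\big(G_1^{-1/2}G_2G_1^{-1/2}\big)\ \lambda_{\max}\big(H_1^{-1/2}H_2H_1^{-1/2}\big)}.$$
   Context: $SL^+_{sym}(2)$: real symmetric positive definite $2\times2$ matrices with determinant $1$; $SL(2)$: real $2\times2$ matrices of determinant $1$; $\lambda_{\max}(M)$: largest eigenvalue of a symmetric $M$; $M^{-1/2}$ is the positive definite square root of $M^{-1}$. For $G_1,G_2,H_1,H_2\in SL^+_{sym}(2)$ define $$K^{min}:=\min_{A,B\in SL(2)}\ \max_{i=1,2}\ \lambda_{\max}(B^TG_iB)\,\lambda_{\max}(A^TH_iA).$$ *)

(* Defs.v *)
From Stdlib Require Import Reals Lra ClassicalEpsilon.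
Open Scope R_scope.

Record M2 := mkM2 { m11 : R; m12 : R; m21 : R; m22 : R }.

Definition Id2 : M2 := mkM2 1 0 0 1.

Definition mmul (A B : M2) : M2 :=
  mkM2 (m11 A * m11 B + m12 A * m21 B) (m11 A * m12 B + m12 A * m22 B)
       (m21 A * m11 B + m22 A * m21 B) (m21 A * m12 B + m22 A * m22 B).

Definition mtr (A : M2) : M2 := mkM2 (m11 A) (m21 A) (m12 A) (m22 A).

Definition det2 (A : M2) : R := m11 A * m22 A - m12 A * m21 A.

Definition minv (A : M2) : M2 :=
  mkM2 (m22 A / det2 A) (- m12 A / det2 A) (- m21 A / det2 A) (m11 A / det2 A).

Definition is_sym (A : M2) : Prop := m12 A = m21 A.

Definition posdef (A : M2) : Prop :=
  forall x y : R, (x <> 0 \/ y <> 0) ->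
    0 < x * (m11 A * x + m12 A * y) + y * (m21 A * x + m22 A * y).

Definition SLsymp (A : M2) : Prop := is_sym A /\ posdef A /\ det2 A = 1.

Definition SL2 (A : M2) : Prop := det2 A = 1.

Definition eigenvalue (A : M2) (l : R) : Prop :=
  exists x y : R, (x <> 0 \/ y <> 0) /\
    m11 A * x + m12 A * y = l * x /\ m21 A * x + m22 A * y = l * y.

Definition is_lambda_max (A : M2) (l : R) : Prop :=
  eigenvalue A l /\ forall m, eigenvalue A m -> m <= l.

(* largest eigenvalue (well defined for symmetric A) *)
Definition lambda_max (A : M2) : R :=
  epsilon (inhabits 0) (is_lambda_max A).

Definition minv_sqrt (A : M2) : M2 :=
  epsilon (inhabits Id2) (fun S => is_sym S /\ posdef S /\ mmul S S = minv A).

Definition Kobj (G1 G2 H1 H2 A B : M2) : R :=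
  Rmax (lambda_max (mmul (mtr B) (mmul G1 B)) * lambda_max (mmul (mtr A) (mmul H1 A)))
       (lambda_max (mmul (mtr B) (mmul G2 B)) * lambda_max (mmul (mtr A) (mmul H2 A))).

Definition is_Kmin (G1 G2 H1 H2 : M2) (v : R) : Prop :=
  (exists A B, SL2 A /\ SL2 B /\ Kobj G1 G2 H1 H2 A B = v) /\
  (forall A B, SL2 A -> SL2 B -> v <= Kobj G1 G2 H1 H2 A B).

(* Main.v *)
Require Import Defs.
From Stdlib Require Import Reals Lra Psatz ClassicalEpsilon.
Open Scope R_scope.

Definition Lf (M : M2) : R :=
  (m11 M + m22 M)/2 + sqrt (((m11 M - m22 M)/2)^2 + m12 M ^2).
Definition qf (M : M2) (x y : R) : R :=
  x * (m11 M * x + m12 M * y) + y * (m21 M * x + m22 M * y).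

Lemma Lkey a b c d : 0 <= Lf (mkM2 a b c d) - a /\ 0 <= Lf (mkM2 a b c d) - d /\
  (Lf (mkM2 a b c d) - a) * (Lf (mkM2 a b c d) - d) = b * b.
Proof.
  unfold Lf; cbn [m11 m12 m21 m22].
  set (r := sqrt (((a - d) / 2) ^ 2 + b ^ 2)).
  assert (r0 : 0 <= r) by apply sqrt_pos.
  assert (rr : r * r = ((a - d) / 2) ^ 2 + b ^ 2).
  { unfold r; apply sqrt_sqrt. pose proof (pow2_ge_0 ((a-d)/2)); pose proof (pow2_ge_0 b); lra. }
  assert (rr' : r * r = ((a-d)/2)*((a-d)/2) + b*b) by (rewrite rr; ring).
  assert (bb : 0 <= b*b) by nra.
  assert (ru : (a-d)/2 <= r /\ (d-a)/2 <= r).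
  { set (u := (a-d)/2) in *. split.
    - destruct (Rle_or_lt u r) as [h|h]; [exact h|].
      assert (r*r < u*u) by (apply Rmult_le_0_lt_compat; lra). lra.
    - destruct (Rle_or_lt (-u) r) as [h|h]; [unfold u in h; lra|].
      assert (r*r < (-u)*(-u)) by (apply Rmult_le_0_lt_compat; lra). lra. }
  split; [|split].
  - lra.
  - lra.
  - transitivity (r*r - ((a-d)/2)^2); [field|]. rewrite rr. ring.
Qed.

Lemma eig_le M m : is_sym M -> eigenvalue M m -> m <= Lf M.
Proof.
  destruct M as [a b c d]; unfold is_sym, eigenvalue; simpl. intros Hs; subst c.
  intros [x [y [Hxy [E1 E2]]]].
  assert (Dx : ((a-m)*(d-m)-b*b)*x = 0).
  { transitivity ((d-m)*((a*x+b*y) - m*x) - b*((b*x+d*y) - m*y)); [ring|].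
    rewrite E1, E2; ring. }
  assert (Dy : ((a-m)*(d-m)-b*b)*y = 0).
  { transitivity ((a-m)*((b*x+d*y) - m*y) - b*((a*x+b*y) - m*x)); [ring|].
    rewrite E1, E2; ring. }
  assert (D0 : (a-m)*(d-m)-b*b = 0).
  { destruct Hxy as [Hx|Hy].
    - apply Rmult_integral in Dx; tauto.
    - apply Rmult_integral in Dy; tauto. }
  unfold Lf; cbn [m11 m12 m21 m22].
  set (r := sqrt (((a - d) / 2) ^ 2 + b ^ 2)).
  assert (r0 : 0 <= r) by apply sqrt_pos.
  assert (rr : r * r = ((a - d) / 2) ^ 2 + b ^ 2).
  { unfold r; apply sqrt_sqrt. pose proof (pow2_ge_0 ((a-d)/2)); pose proof (pow2_ge_0 b); lra. }
  assert (rr' : r * r = ((a-d)/2)*((a-d)/2) + b*b) by (rewrite rr; ring).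
  assert (rr2 : r * r = (m - (a+d)/2) * (m - (a+d)/2)) by nra.
  nra.
Qed.

Lemma Lf_eig M : is_sym M -> eigenvalue M (Lf M).
Proof.
  destruct M as [a b c d]; unfold is_sym, eigenvalue; simpl. intros Hs; subst c.
  destruct (Lkey a b b d) as [H1 [H2 H3]].
  set (L := Lf (mkM2 a b b d)) in *.
  destruct (Req_dec b 0) as [Hb|Hb]; [destruct (Req_dec (L - a) 0) as [Ha|Ha]|].
  - exists 1, 0. split; [left; lra|]. split; [lra|]. subst b; ring.
  - exists b, (L - a). split; [right; exact Ha|]. split; [ring|]. nra.
  - exists b, (L - a). split; [left; exact Hb|]. split; [ring|]. nra.
Qed.

Lemma lmax_eq M : is_sym M -> lambda_max M = Lf M.
Proof.
  intros Hs. unfold lambda_max.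
  assert (H : is_lambda_max M (Lf M)).
  { split; [apply Lf_eig; auto| intros m Hm; apply eig_le; auto]. }
  pose proof (epsilon_spec (inhabits 0) (is_lambda_max M) (ex_intro _ _ H)) as H2.
  destruct H as [Ha Hb], H2 as [Hc Hd].
  apply Rle_antisym; auto.
Qed.

Lemma form_nonneg p q b x y : 0 <= p -> 0 <= q -> p*q = b*b ->
  0 <= p*x*x - 2*b*x*y + q*y*y.
Proof.
  intros Hp Hq Hpq. destruct Hp as [Hp|Hp].
  - assert (E : p*(p*x*x - 2*b*x*y + q*y*y) = (p*x - b*y)*(p*x-b*y)).
    { transitivity ((p*x - b*y)*(p*x-b*y) + (p*q - b*b)*y*y); [ring|]. rewrite Hpq; ring. }
    assert (0 <= (p*x - b*y)*(p*x-b*y)) by (pose proof (Rle_0_sqr (p*x-b*y)); unfold Rsqr in *; lra).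
    set (F := p*x*x - 2*b*x*y + q*y*y) in *.
    destruct (Rle_or_lt 0 F) as [h|h]; [exact h|].
    assert (p*F < 0) by (apply Rmult_pos_neg; lra). lra.
  - subst p. assert (b*b = 0) by lra. assert (b = 0) by (apply Rmult_integral in H; tauto). subst b.
    assert (0 <= q*(y*y)) by (apply Rmult_le_pos; [lra|apply Rle_0_sqr]). lra.
Qed.

Lemma qf_upper M x y : is_sym M -> qf M x y <= Lf M * (x*x + y*y).
Proof.
  destruct M as [a b c d]; unfold is_sym, qf; simpl. intros Hs; subst c.
  destruct (Lkey a b b d) as [H1 [H2 H3]].
  set (L := Lf (mkM2 a b b d)) in *.
  pose proof (form_nonneg (L-a) (L-d) b x y H1 H2 H3). lra.
Qed.

Lemma qf_lower M x y : is_sym M ->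
  (m11 M + m22 M - Lf M) * (x*x + y*y) <= qf M x y.
Proof.
  destruct M as [a b c d]; unfold is_sym, qf; simpl. intros Hs; subst c.
  destruct (Lkey a b b d) as [H1 [H2 H3]].
  set (L := Lf (mkM2 a b b d)) in *.
  assert (H4 : (L-d)*(L-a) = (-b)*(-b)) by lra.
  pose proof (form_nonneg (L-d) (L-a) (-b) x y H2 H1 H4). lra.
Qed.

Lemma Lf_prod M : is_sym M -> Lf M * (m11 M + m22 M - Lf M) = det2 M.
Proof.
  destruct M as [a b c d]; unfold is_sym, det2; simpl. intros Hs; subst c.
  destruct (Lkey a b b d) as [H1 [H2 H3]].
  set (L := Lf (mkM2 a b b d)) in *. lra.
Qed.

Lemma Lf_ge M : is_sym M -> m11 M + m22 M - Lf M <= Lf M.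
Proof.
  destruct M as [a b c d]; unfold is_sym; simpl. intros Hs; subst c.
  destruct (Lkey a b b d) as [H1 [H2 H3]]. lra.
Qed.

Lemma Lf_diag x y : Lf (mkM2 x 0 0 y) = Rmax x y.
Proof.
  unfold Lf; cbn [m11 m12 m21 m22].
  replace (((x - y) / 2) ^ 2 + 0 ^ 2) with (Rsqr ((x-y)/2)) by (unfold Rsqr; ring).
  rewrite sqrt_Rsqr_abs. unfold Rmax, Rabs.
  destruct (Rle_dec x y); destruct (Rcase_abs ((x-y)/2)); lra.
Qed.
Definition congr (X G : M2) : M2 := mmul (mtr X) (mmul G X).

Lemma congr_comp X Y G : congr (mmul X Y) G = congr Y (congr X G).
Proof. destruct X, Y, G; unfold congr, mmul, mtr; simpl; f_equal; ring. Qed.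

Lemma det_congr X G : det2 (congr X G) = det2 X * det2 G * det2 X.
Proof. destruct X, G; unfold congr, det2, mmul, mtr; simpl; ring. Qed.

Lemma det_mmul X Y : det2 (mmul X Y) = det2 X * det2 Y.
Proof. destruct X, Y; unfold det2, mmul; simpl; ring. Qed.

Lemma congr_sym X G : is_sym G -> is_sym (congr X G).
Proof. destruct X, G; unfold is_sym, congr, mmul, mtr; simpl; intros ->; ring. Qed.

Lemma qf_congr_adj B G w1 w2 : det2 B = 1 ->
  qf (congr B G) (m22 B*w1 - m12 B*w2) (-(m21 B)*w1 + m11 B*w2) = qf G w1 w2.
Proof.
  intros H. transitivity (det2 B * det2 B * qf G w1 w2).
  - destruct B, G; unfold qf, congr, det2, mmul, mtr; simpl; ring.
  - rewrite H; ring.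
Qed.

Lemma posdef_of p q r : 0 < p -> 0 < p*r - q*q -> posdef (mkM2 p q q r).
Proof.
  intros Hp Hd x y Hxy; simpl.
  assert (E : p * (x * (p * x + q * y) + y * (q * x + r * y)) = (p*x+q*y)*(p*x+q*y) + (p*r-q*q)*(y*y)) by ring.
  assert (h1 : 0 <= (p*x+q*y)*(p*x+q*y)) by (pose proof (Rle_0_sqr (p*x+q*y)); unfold Rsqr in *; lra).
  set (F := x * (p * x + q * y) + y * (q * x + r * y)) in *.
  destruct (Req_dec y 0) as [hy|hy].
  - subst y. destruct Hxy as [hx|hx]; [|lra].
    unfold F. replace (x * (p * x + q * 0) + 0 * (q * x + r * 0)) with (p*(x*x)) by ring.
    apply Rmult_lt_0_compat; [lra|]. assert (0 < x*x) by (apply Rsqr_pos_lt; exact hx). lra.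
  - assert (0 < y*y) by (apply Rsqr_pos_lt; exact hy).
    assert (0 < (p*r-q*q)*(y*y)) by (apply Rmult_lt_0_compat; lra).
    destruct (Rle_or_lt F 0) as [h|h]; [|exact h].
    assert (p*F <= p*0) by (apply Rmult_le_compat_l; lra). lra.
Qed.

Lemma posdef_diag M : posdef M -> 0 < m11 M /\ 0 < m22 M.
Proof.
  intros H. split.
  - specialize (H 1 0 (or_introl R1_neq_R0)).
    replace (1 * (m11 M * 1 + m12 M * 0) + 0 * (m21 M * 1 + m22 M * 0)) with (m11 M) in H by ring. exact H.
  - specialize (H 0 1 (or_intror R1_neq_R0)).
    replace (0 * (m11 M * 0 + m12 M * 1) + 1 * (m21 M * 0 + m22 M * 1)) with (m22 M) in H by ring. exact H.
Qed.

Lemma posdef_det M : is_sym M -> posdef M -> 0 < det2 M.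
Proof.
  intros Hs Hp. destruct (posdef_diag M Hp) as [h1 h2].
  destruct M as [a b c d]; unfold is_sym, det2 in *; simpl in *; subst c.
  specialize (Hp (-b) a (or_intror (Rgt_not_eq _ _ h1))). simpl in Hp.
  replace (- b * (a * - b + b * a) + a * (b * - b + d * a)) with (a*(a*d-b*b)) in Hp by ring.
  destruct (Rle_or_lt (a*d-b*b) 0) as [h|h]; [|exact h].
  assert (a*(a*d-b*b) <= a*0) by (apply Rmult_le_compat_l; lra). lra.
Qed.

Lemma minv_det1 G : det2 G = 1 -> minv G = mkM2 (m22 G) (- m12 G) (- m21 G) (m11 G).
Proof. intros H. unfold minv. rewrite H. f_equal; field. Qed.

Lemma msqrt_exists G : SLsymp G -> exists S, is_sym S /\ posdef S /\ mmul S S = minv G.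
Proof.
  intros [Hs [Hp Hd]]. destruct (posdef_diag G Hp) as [h1 h2].
  rewrite (minv_det1 G Hd).
  destruct G as [g1 g2 g3 g4]; unfold is_sym, det2 in *; simpl in *; subst g3.
  set (s := g1 + g4 + 2).
  assert (hs : 0 < s) by (unfold s; lra).
  set (k := /sqrt s).
  assert (hk : 0 < k) by (unfold k; apply Rinv_0_lt_compat, sqrt_lt_R0; lra).
  assert (kk : k*k*s = 1).
  { unfold k. rewrite <- Rinv_mult, (sqrt_sqrt s) by lra. field. lra. }
  exists (mkM2 ((g4+1)*k) (-g2*k) (-g2*k) ((g1+1)*k)).
  split; [reflexivity|]. split.
  - apply posdef_of.
    + apply Rmult_lt_0_compat; lra.
    + replace ((g4 + 1) * k * ((g1 + 1) * k) - - g2 * k * (- g2 * k)) with ((g1*g4-g2*g2 - 1)*(k*k) + k*k*s) by (unfold s; ring).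
      rewrite Hd, kk. lra.
  - unfold mmul; simpl. f_equal.
    + transitivity (g4 * (k*k*s) + (k*k)*(1 - (g1*g4 - g2*g2))); [unfold s; ring|]. rewrite kk, Hd; ring.
    + transitivity (-g2 * (k*k*s)); [unfold s; ring|]. rewrite kk; ring.
    + transitivity (-g2 * (k*k*s)); [unfold s; ring|]. rewrite kk; ring.
    + transitivity (g1 * (k*k*s) + (k*k)*(1 - (g1*g4 - g2*g2))); [unfold s; ring|]. rewrite kk, Hd; ring.
Qed.

Lemma S_facts G : SLsymp G -> exists p q r, minv_sqrt G = mkM2 p q q r /\ p*r-q*q = 1 /\
  m11 G = q*q+r*r /\ m22 G = p*p+q*q /\ m12 G = -((p+r)*q) /\ m21 G = -((p+r)*q).
Proof.
  intros HG. pose proof (msqrt_exists G HG) as Ex.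
  pose proof (epsilon_spec (inhabits Id2) _ Ex) as Hspec. fold (minv_sqrt G) in Hspec.
  destruct Hspec as [Ss [Sp Sm]].
  pose proof (posdef_det _ Ss Sp) as Sd.
  destruct HG as [Hs [Hp Hd]].
  rewrite (minv_det1 G Hd) in Sm.
  destruct (minv_sqrt G) as [p q q' r]; unfold is_sym in Ss; simpl in Ss; subst q'.
  destruct G as [g1 g2 g3 g4]; unfold is_sym, det2 in *; simpl in *; subst g3.
  unfold mmul in Sm; simpl in Sm. injection Sm; intros E4 E3 E2 E1.
  assert (D2 : (p*r-q*q)*(p*r-q*q) = 1).
  { transitivity ((p * p + q * q)*(q * p + r * q) * 0 + (q*q+r*r)*(p*p+q*q) - (p*q+q*r)*(p*q+q*r)); [ring|].
    rewrite E1, E4, E2. rewrite <- Hd. ring. }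
  assert (D1 : p*r-q*q = 1).
  { set (D := p*r-q*q) in *. assert ((D-1)*(D+1) = 0) by lra.
    apply Rmult_integral in H; lra. }
  exists p, q, r. repeat split; try lra.
Qed.

Lemma pos_of_mul a U V : 0 <= U -> 0 < V -> V <= a * U -> 0 < a.
Proof.
  intros hU hV h. destruct (Rle_or_lt a 0) as [ha|ha]; [|exact ha].
  assert (a*U <= 0*U) by (apply Rmult_le_compat_r; lra). lra.
Qed.

Lemma sq_nonneg a : 0 <= a*a.
Proof. pose proof (Rle_0_sqr a); unfold Rsqr in *; lra. Qed.

Lemma lower_side G1 G2 B : SLsymp G1 -> SLsymp G2 -> det2 B = 1 ->
  0 < lambda_max (mmul (minv_sqrt G1) (mmul G2 (minv_sqrt G1))) /\
  0 < lambda_max (mmul (mtr B) (mmul G1 B)) /\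
  0 < lambda_max (mmul (mtr B) (mmul G2 B)) /\
  lambda_max (mmul (minv_sqrt G1) (mmul G2 (minv_sqrt G1))) <=
  lambda_max (mmul (mtr B) (mmul G1 B)) * lambda_max (mmul (mtr B) (mmul G2 B)).
Proof.
  intros HG1 HG2 HB.
  destruct (S_facts G1 HG1) as [p [q [r [HS [Hdet [E11 [E22 [E12 E21]]]]]]]].
  pose proof HG1 as [Hs1 [Hp1 Hd1]]. pose proof HG2 as [Hs2 [Hp2 Hd2]].
  set (N := mmul (minv_sqrt G1) (mmul G2 (minv_sqrt G1))).
  assert (NS : is_sym N).
  { unfold N; rewrite HS. destruct G2; unfold is_sym, mmul in *; simpl in *; rewrite Hs2; ring. }
  change (mmul (mtr B) (mmul G1 B)) with (congr B G1).
  change (mmul (mtr B) (mmul G2 B)) with (congr B G2).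
  assert (PS : is_sym (congr B G1)) by (apply congr_sym; exact Hs1).
  assert (QS : is_sym (congr B G2)) by (apply congr_sym; exact Hs2).
  assert (PD : det2 (congr B G1) = 1) by (rewrite det_congr, HB, Hd1; ring).
  rewrite !lmax_eq by assumption.
  destruct (Lf_eig N NS) as [v1 [v2 [Hv [Ev1 Ev2]]]].
  set (w1 := p*v1 + q*v2). set (w2 := q*v1 + r*v2).
  set (V := v1*v1 + v2*v2).
  assert (Hw1 : qf G1 w1 w2 = V).
  { unfold qf, w1, w2, V. rewrite E11, E12, E21, E22.
    transitivity ((p*r-q*q)*(p*r-q*q)*(v1*v1+v2*v2)); [ring|rewrite Hdet; ring]. }
  assert (Hw2 : qf G2 w1 w2 = Lf N * V).
  { transitivity (qf N v1 v2).
    - unfold qf, N, w1, w2. rewrite HS. simpl. ring.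
    - unfold qf. rewrite Ev1, Ev2. unfold V; ring. }
  assert (HV : 0 < V).
  { unfold V. destruct Hv as [h|h].
    - assert (0 < v1*v1) by (apply Rsqr_pos_lt; exact h). pose proof (sq_nonneg v2). lra.
    - assert (0 < v2*v2) by (apply Rsqr_pos_lt; exact h). pose proof (sq_nonneg v1). lra. }
  assert (Hmu : 0 < Lf N).
  { assert (hw : w1 <> 0 \/ w2 <> 0).
    { destruct (Req_dec w1 0) as [h1|h1]; [|left; exact h1].
      destruct (Req_dec w2 0) as [h2|h2]; [|right; exact h2].
      exfalso. rewrite h1, h2 in Hw1. unfold qf in Hw1. lra. }
    specialize (Hp2 w1 w2 hw). fold (qf G2 w1 w2) in Hp2. rewrite Hw2 in Hp2.
    destruct (Rle_or_lt (Lf N) 0) as [h|h]; [|exact h].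
    assert (Lf N * V <= 0 * V) by (apply Rmult_le_compat_r; lra). lra. }
  set (u1 := m22 B*w1 - m12 B*w2). set (u2 := -(m21 B)*w1 + m11 B*w2).
  assert (HP : qf (congr B G1) u1 u2 = V) by (rewrite <- Hw1; apply qf_congr_adj; exact HB).
  assert (HQ : qf (congr B G2) u1 u2 = Lf N * V) by (rewrite <- Hw2; apply qf_congr_adj; exact HB).
  set (U := u1*u1 + u2*u2).
  assert (HU : 0 <= U) by (unfold U; pose proof (sq_nonneg u1); pose proof (sq_nonneg u2); lra).
  pose proof (qf_upper (congr B G1) u1 u2 PS) as UP. fold U in UP.
  pose proof (qf_lower (congr B G1) u1 u2 PS) as LP. fold U in LP.
  pose proof (Lf_prod (congr B G1) PS) as PP. rewrite PD in PP.
  pose proof (qf_upper (congr B G2) u1 u2 QS) as UQ. fold U in UQ.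
  set (x := Lf (congr B G1)) in *. set (z := Lf (congr B G2)) in *.
  set (l := m11 (congr B G1) + m22 (congr B G1) - x) in *.
  assert (hx : 0 < x) by (apply (pos_of_mul _ U V); lra).
  assert (hmV : 0 < Lf N * V) by (apply Rmult_lt_0_compat; lra).
  assert (hz : 0 < z) by (apply (pos_of_mul _ U (Lf N * V)); lra).
  assert (h1 : x * (l * U) <= x * V) by (apply Rmult_le_compat_l; lra).
  assert (h2 : U <= x * V) by (replace U with (x*l*U) by (rewrite PP; ring); lra).
  assert (h3 : z * U <= z * (x * V)) by (apply Rmult_le_compat_l; lra).
  split; [exact Hmu|]. split; [exact hx|]. split; [exact hz|].
  destruct (Rle_or_lt (Lf N) (x*z)) as [h|h]; [exact h|].
  assert (0 < (Lf N - x*z)*V) by (apply Rmult_lt_0_compat; lra). lra.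
Qed.

Lemma rot_diag N mu c s : is_sym N -> det2 N = 1 -> c*c+s*s = 1 ->
  m11 N*c + m12 N*s = mu*c -> m21 N*c + m22 N*s = mu*s -> mu <> 0 ->
  congr (mkM2 c (-s) s c) N = mkM2 mu 0 0 (1/mu).
Proof.
  destruct N as [a b b' d]; unfold is_sym, det2; simpl; intros Hs Hd Hcs E1 E2 Hmu; subst b'.
  unfold congr, mmul, mtr; simpl. f_equal.
  - transitivity (c*(a*c+b*s) + s*(b*c+d*s)); [ring|]. rewrite E1, E2.
    transitivity (mu*(c*c+s*s)); [ring|]. rewrite Hcs; ring.
  - transitivity ((-s)*(a*c+b*s) + c*(b*c+d*s)); [ring|]. rewrite E1, E2. ring.
  - transitivity ((-s)*(a*c+b*s) + c*(b*c+d*s)); [ring|]. rewrite E1, E2. ring.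
  - assert (He : mu * (a*s*s - 2*b*s*c + d*c*c) = 1).
    { transitivity (a*s*(mu*s) - b*s*(mu*c) - b*c*(mu*s) + d*c*(mu*c)); [ring|].
      rewrite <- E1, <- E2.
      transitivity ((a*d-b*b)*(c*c+s*s)); [ring|]. rewrite Hd, Hcs; ring. }
    transitivity (a*s*s - 2*b*s*c + d*c*c); [ring|].
    apply (Rmult_eq_reg_l mu); [|exact Hmu]. rewrite He. field. exact Hmu.
Qed.

Lemma congr_rot_id c s : c*c+s*s = 1 -> congr (mkM2 c (-s) s c) Id2 = Id2.
Proof.
  intros H. unfold congr, mmul, mtr, Id2; simpl. f_equal.
  - transitivity (c*c+s*s); [ring|exact H].
  - ring.
  - ring.
  - transitivity (c*c+s*s); [ring|exact H].
Qed.

Lemma congr_diag d1 d2 a b :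
  congr (mkM2 d1 0 0 d2) (mkM2 a 0 0 b) = mkM2 (d1*a*d1) 0 0 (d2*b*d2).
Proof. unfold congr, mmul, mtr; simpl. f_equal; ring. Qed.

Lemma lmax_diag a b : lambda_max (mkM2 a 0 0 b) = Rmax a b.
Proof. rewrite lmax_eq by reflexivity. apply Lf_diag. Qed.

Lemma attain_side G1 G2 : SLsymp G1 -> SLsymp G2 -> exists B, det2 B = 1 /\
  lambda_max (mmul (mtr B) (mmul G1 B)) =
    sqrt (lambda_max (mmul (minv_sqrt G1) (mmul G2 (minv_sqrt G1)))) /\
  lambda_max (mmul (mtr B) (mmul G2 B)) =
    sqrt (lambda_max (mmul (minv_sqrt G1) (mmul G2 (minv_sqrt G1)))).
Proof.
  intros HG1 HG2.
  assert (HI : det2 Id2 = 1) by (unfold det2, Id2; simpl; ring).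
  destruct (lower_side G1 G2 Id2 HG1 HG2 HI) as [Hmu _].
  destruct (S_facts G1 HG1) as [p [q [r [HS [Hdet [E11 [E22 [E12 E21]]]]]]]].
  pose proof HG1 as [Hs1 [Hp1 Hd1]]. pose proof HG2 as [Hs2 [Hp2 Hd2]].
  set (S := minv_sqrt G1) in *.
  set (N := mmul S (mmul G2 S)) in *.
  assert (NS : is_sym N).
  { unfold N; rewrite HS. destruct G2; unfold is_sym, mmul in *; simpl in *; rewrite Hs2; ring. }
  assert (ND : det2 N = 1).
  { unfold N. rewrite !det_mmul, Hd2, HS. unfold det2; simpl. rewrite Hdet. ring. }
  rewrite lmax_eq in Hmu by exact NS. rewrite lmax_eq by exact NS.
  set (mu := Lf N) in *.
  assert (Hmu1 : 1 <= mu).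
  { pose proof (Lf_prod N NS) as PP. pose proof (Lf_ge N NS) as GE. fold mu in PP, GE.
    rewrite ND in PP.
    assert (mu * (m11 N + m22 N - mu) <= mu * mu) by (apply Rmult_le_compat_l; lra).
    destruct (Rle_or_lt 1 mu) as [h|h]; [exact h|].
    assert (mu * mu < mu * 1) by (apply Rmult_lt_compat_l; lra). lra. }
  destruct (Lf_eig N NS) as [v1 [v2 [Hv [Ev1 Ev2]]]]. fold mu in Ev1, Ev2.
  set (V := v1*v1 + v2*v2).
  assert (HV : 0 < V).
  { unfold V. destruct Hv as [h|h].
    - assert (0 < v1*v1) by (apply Rsqr_pos_lt; exact h). pose proof (sq_nonneg v2). lra.
    - assert (0 < v2*v2) by (apply Rsqr_pos_lt; exact h). pose proof (sq_nonneg v1). lra. }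
  set (n := sqrt V).
  assert (hn : 0 < n) by (apply sqrt_lt_R0; exact HV).
  assert (nn : n * n = V) by (apply sqrt_sqrt; lra).
  set (c := v1 / n). set (s := v2 / n).
  assert (Hcs : c*c + s*s = 1).
  { unfold c, s. transitivity ((v1*v1+v2*v2)/(n*n)); [field; lra|]. fold V. rewrite nn. field. lra. }
  assert (Ec1 : m11 N*c + m12 N*s = mu*c).
  { unfold c, s. transitivity ((m11 N*v1 + m12 N*v2)/n); [field; lra|]. rewrite Ev1. field. lra. }
  assert (Ec2 : m21 N*c + m22 N*s = mu*s).
  { unfold c, s. transitivity ((m21 N*v1 + m22 N*v2)/n); [field; lra|]. rewrite Ev2. field. lra. }
  set (m := sqrt mu).
  assert (hm1 : 1 <= m) by (unfold m; rewrite <- sqrt_1; apply sqrt_le_1_alt; exact Hmu1).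
  assert (mm : m * m = mu) by (apply sqrt_sqrt; lra).
  set (k := sqrt m).
  assert (hk : 0 < k) by (apply sqrt_lt_R0; lra).
  assert (kk : k * k = m) by (apply sqrt_sqrt; lra).
  set (R := mkM2 c (-s) s c). set (D := mkM2 (/k) 0 0 k).
  exists (mmul S (mmul R D)).
  change (mmul (mtr (mmul S (mmul R D))) (mmul G1 (mmul S (mmul R D))))
    with (congr (mmul S (mmul R D)) G1).
  change (mmul (mtr (mmul S (mmul R D))) (mmul G2 (mmul S (mmul R D))))
    with (congr (mmul S (mmul R D)) G2).
  rewrite !congr_comp.
  assert (SG1 : congr S G1 = Id2).
  { rewrite HS. unfold congr, mmul, mtr, Id2; simpl. rewrite E11, E12, E21, E22. f_equal.
    - transitivity ((p*r-q*q)*(p*r-q*q)); [ring|rewrite Hdet; ring].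
    - ring.
    - ring.
    - transitivity ((p*r-q*q)*(p*r-q*q)); [ring|rewrite Hdet; ring]. }
  assert (SG2 : congr S G2 = N) by (unfold N, congr; rewrite HS; reflexivity).
  rewrite SG1, SG2. unfold R. rewrite congr_rot_id by exact Hcs.
  rewrite (rot_diag N mu c s NS ND Hcs Ec1 Ec2) by lra.
  unfold D, Id2. rewrite !congr_diag, !lmax_diag.
  split; [|split].
  - rewrite !det_mmul, HS. unfold det2, R; simpl. rewrite Hdet.
    transitivity ((c*c+s*s)*(/k*k)); [ring|]. rewrite Hcs, Rinv_l by lra. ring.
  - rewrite Rmax_right; [ring_simplify; lra|].
    replace (/ k * 1 * / k) with (/m) by (rewrite <- kk; field; lra).
    apply (Rmult_le_reg_l m); [lra|]. rewrite Rinv_r by lra.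
    replace (k*1*k) with m by (rewrite <- kk; ring). lra.
  - rewrite Rmax_left.
    + replace (/ k * mu * / k) with (mu / m) by (rewrite <- kk; field; lra).
      rewrite <- mm. field. lra.
    + replace (/ k * mu * / k) with m by (rewrite <- kk, <- mm, <- kk; field; lra).
      replace (k * (1/mu) * k) with (/m) by (rewrite <- mm, <- kk; field; lra).
      apply (Rmult_le_reg_l m); [lra|]. rewrite Rinv_r by lra. lra.
Qed.

Theorem mainTheorem7 (G1 G2 H1 H2 : M2) :
  SLsymp G1 -> SLsymp G2 -> SLsymp H1 -> SLsymp H2 ->
  is_Kmin G1 G2 H1 H2
    (sqrt (lambda_max (mmul (minv_sqrt G1) (mmul G2 (minv_sqrt G1))) *
           lambda_max (mmul (minv_sqrt H1) (mmul H2 (minv_sqrt H1))))).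
Proof.
  intros HG1 HG2 HH1 HH2.
  assert (HI : det2 Id2 = 1) by (unfold det2, Id2; simpl; ring).
  destruct (lower_side G1 G2 Id2 HG1 HG2 HI) as [Hmu _].
  destruct (lower_side H1 H2 Id2 HH1 HH2 HI) as [Hnu _].
  split.
  - destruct (attain_side G1 G2 HG1 HG2) as [B [HB [E1 E2]]].
    destruct (attain_side H1 H2 HH1 HH2) as [A [HA [F1 F2]]].
    exists A, B. split; [exact HA|]. split; [exact HB|].
    unfold Kobj. rewrite E1, E2, F1, F2, Rmax_left by lra.
    symmetry. apply sqrt_mult; lra.
  - intros A B HA HB.
    destruct (lower_side G1 G2 B HG1 HG2 HB) as [_ [hx [hz hxz]]].
    destruct (lower_side H1 H2 A HH1 HH2 HA) as [_ [hy [hw hyw]]].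
    unfold Kobj.
    set (mu := lambda_max (mmul (minv_sqrt G1) (mmul G2 (minv_sqrt G1)))) in *.
    set (nu := lambda_max (mmul (minv_sqrt H1) (mmul H2 (minv_sqrt H1)))) in *.
    set (x := lambda_max (mmul (mtr B) (mmul G1 B))) in *.
    set (z := lambda_max (mmul (mtr B) (mmul G2 B))) in *.
    set (y := lambda_max (mmul (mtr A) (mmul H1 A))) in *.
    set (w := lambda_max (mmul (mtr A) (mmul H2 A))) in *.
    set (M := Rmax (x*y) (z*w)).
    assert (h1 : x*y <= M) by apply Rmax_l.
    assert (h2 : z*w <= M) by apply Rmax_r.
    assert (hxy : 0 < x*y) by (apply Rmult_lt_0_compat; lra).
    assert (hzw : 0 < z*w) by (apply Rmult_lt_0_compat; lra).
    assert (h3 : mu * nu <= (x*z)*(y*w)) by (apply Rmult_le_compat; lra).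
    assert (h4 : (x*y)*(z*w) <= M*M) by (apply Rmult_le_compat; lra).
    rewrite <- (sqrt_square M) by lra.
    apply sqrt_le_1_alt.
    replace ((x*z)*(y*w)) with ((x*y)*(z*w)) in h3 by ring. lra.
Qed.
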